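(* Let $(V_i)_{i\ge1}$ be real-valued random variables such that $\mu(0,x):=\mathbb{E}\sum_i\mathbf{1}_{\{0<V_i<x\}}$ satisfies $\limsup_{x\downarrow0}\mu(0,x)/x<\infty$. Then there exist $\beta>0$ and $s_0>0$ such that for every sequence of events $A_i\subseteq\{V_i>0\}$ with $s:=\sum_i\mathbb{P}(A_i)\le s_0$, \[ \mathbb{E}\sum_i V_i\mathbf{1}_{A_i}\ \ge\ \beta s^2 . \] *)

(* Defs.v *)
From HB Require Import structures.
From mathcomp Require Import all_boot all_order all_algebra.
From mathcomp Require Export all_classical all_reals all_analysis.
Set Implicit Arguments. Unset Strict Implicit. Unset Printing Implicit Defensive.
Import Order.TTheory GRing.Theory Num.Theory.
Local Open Scope classical_set_scope.
Local Open Scope ring_scope.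

Definition mu0 (d : measure_display) (T : measurableType d) (R : realType)
  (P : probability T R) (V : nat -> {RV P >-> R}) (x : R) : \bar R :=
  (\int[P]_t (\sum_(0 <= i <oo) (\1_[set u | 0 < V i u < x] t)%:E))%E.

Definition EsumVA (d : measure_display) (T : measurableType d) (R : realType)
  (P : probability T R) (V : nat -> {RV P >-> R}) (A : nat -> set T) : \bar R :=
  (\int[P]_t (\sum_(0 <= i <oo) ((V i t)%:E * (\1_(A i) t)%:E)))%E.

(* Main.v *)
Require Import Defs.
From HB Require Import structures.
From mathcomp Require Import all_boot all_order all_algebra.
From mathcomp Require Import all_classical all_reals all_analysis.
From mathcomp Require Import measurable_realfun.
From mathcomp Require Import ring lra.
Import Order.TTheory GRing.Theory Num.Theory.
Local Open Scope classical_set_scope.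
Local Open Scope ring_scope.

Section key.
Context (d : measure_display) (T : measurableType d) (R : realType)
  (P : probability T R) (V : nat -> {RV P >-> R}).

Local Open Scope ereal_scope.

Lemma mB (x : R) i : measurable [set u | (0 < V i u < x)%R].
Proof.
have -> : [set u | (0 < V i u < x)%R] = V i @^-1` `]0%R, x[.
  by apply/seteqP; split => u /=; rewrite in_itv.
exact: measurable_funPTI.
Qed.

Lemma key (x : R) (A : nat -> set T) : (0 < x)%R ->
  (forall i, measurable (A i)) ->
  (forall i, A i `<=` [set t | (0 < V i t)%R]) ->
  x%:E * (\sum_(0 <= i <oo) P (A i)) <= EsumVA V A + x%:E * mu0 V x.
Proof.
move=> x0 mA AV.
have mIA i : measurable_fun setT (fun t => ((\1_(A i) t : R)%:E)).
  by apply/measurable_EFinP; exact: measurable_indic.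
have mIB i : measurable_fun setT (fun t => ((\1_[set u | (0 < V i u < x)%R] t : R)%:E)).
  by apply/measurable_EFinP; apply: measurable_indic; exact: mB.
have mVA i : measurable_fun setT (fun t => (V i t)%:E * ((\1_(A i) t : R)%:E)).
  apply: emeasurable_funM => //; apply/measurable_EFinP; exact: measurable_funP.
have VA0 i t : 0 <= (V i t)%:E * (\1_(A i) t)%:E.
  rewrite -EFinM lee_fin indicE; case: (boolP (t \in A i)) => [/set_mem/AV/= h|_].
    by rewrite mulr1 ltW.
  by rewrite mulr0.
have sA : \sum_(0 <= i <oo) P (A i) =
    \int[P]_t (\sum_(0 <= i <oo) ((\1_(A i) t : R)%:E)).
  rewrite integral_nneseries //.
    by apply: eq_eseriesr => i _; rewrite integral_indic // setIT.
rewrite /EsumVA /mu0 sA.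
have fA0 : forall t, [set: T] t -> 0 <= \sum_(0 <= i <oo) ((\1_(A i) t : R)%:E).
  by move=> t _; apply: nneseries_ge0 => i _ _; rewrite lee_fin.
have mfA : measurable_fun setT (fun t => \sum_(0 <= i <oo) ((\1_(A i) t : R)%:E)).
  by apply: ge0_emeasurable_sum => // k t _ _; rewrite lee_fin.
have fB0 : forall t, [set: T] t -> 0 <= \sum_(0 <= i <oo) ((\1_[set u | (0 < V i u < x)%R] t : R)%:E).
  by move=> t _; apply: nneseries_ge0 => i _ _; rewrite lee_fin.
have mfB : measurable_fun setT (fun t => \sum_(0 <= i <oo) ((\1_[set u | (0 < V i u < x)%R] t : R)%:E)).
  by apply: ge0_emeasurable_sum => // k t _ _; rewrite lee_fin.
have fV0 : forall t, [set: T] t -> 0 <= \sum_(0 <= i <oo) ((V i t)%:E * (\1_(A i) t : R)%:E).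
  by move=> t _; apply: nneseries_ge0 => i _ _.
have mfV : measurable_fun setT (fun t => \sum_(0 <= i <oo) ((V i t)%:E * (\1_(A i) t : R)%:E)).
  by apply: ge0_emeasurable_sum.
have x0' : (0 <= x)%R by exact: ltW.
rewrite -ge0_integralZl_EFin // -ge0_integralZl_EFin // -ge0_integralD //.
2: by move=> t _; apply: mule_ge0; [rewrite lee_fin | exact: fB0].
2: exact: measurable_funeM.
apply: ge0_le_integral => //.
- by move=> t _; apply: mule_ge0; [rewrite lee_fin | exact: fA0].
- exact: measurable_funeM.
- by apply: emeasurable_funD => //; exact: measurable_funeM.
move=> t _.
rewrite -!nneseriesZl; [|by move=> i _; rewrite lee_fin..].
rewrite -nneseriesD //; last by move=> i _ _; rewrite -EFinM lee_fin mulr_ge0 // ltW.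
apply: lee_nneseries; first by move=> i _ _; rewrite -EFinM lee_fin mulr_ge0 // ltW.
move=> i _; rewrite -!EFinM -EFinD lee_fin !indicE.
case: (boolP (t \in A i)) => [tA|tA]; rewrite ?mulr1 ?mulr0 ?add0r.
  have := AV _ _ (set_mem tA) => /= Vt.
  case: (boolP (t \in _)) => /= [|tB]; first by rewrite mulr1 => _; rewrite ler_wpDl // ltW.
  rewrite mulr0 addr0; move: tB; rewrite notin_setE /= => tB.
  by rewrite leNgt; apply/negP => h; apply: tB; rewrite Vt h.
by case: (t \in _); rewrite /= ?mulr1 ?mulr0 // ltW.
Qed.
End key.

Theorem mainTheorem5 (d : measure_display) (T : measurableType d) (R : realType)
  (P : probability T R) (V : nat -> {RV P >-> R}) :
  (* limsup_{x -> 0+} mu(0,x)/x < +oo *)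
  (exists C : R, exists2 delta : R, 0 < delta &
     forall x : R, 0 < x -> x < delta -> (mu0 V x <= (C * x)%:E)%E) ->
  exists beta : R, exists s0 : R, [/\ 0 < beta, 0 < s0 &
    forall A : nat -> set T,
      (forall i, measurable (A i)) ->
      (forall i, A i `<=` [set t | 0 < V i t]) ->
      let s := (\sum_(0 <= i <oo) P (A i))%E in
      (s <= s0%:E)%E ->
      (beta%:E * s * s <= EsumVA V A)%E].
Proof.
move=> [C [delta d0 HC]].
pose C' := Num.max C 1.
have C'1 : (1 <= C')%R by rewrite le_max lexx orbT.
have C'0 : (0 < C')%R by apply: lt_le_trans C'1.
have HC' : forall x : R, 0 < x -> x < delta -> (mu0 V x <= (C' * x)%:E)%E.
  move=> x x0 xd; apply: le_trans (HC x x0 xd) _.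
  by rewrite lee_fin ler_pM2r // le_max lexx.
exists (4 * C')^-1, (C' * delta); split.
- by rewrite invr_gt0 mulr_gt0.
- by rewrite mulr_gt0.
move=> A mA AV s ss0.
have s0 : (0 <= s)%E by apply: nneseries_ge0 => i _ _; exact: measure_ge0.
have E0 : (0 <= EsumVA V A)%E.
  apply: integral_ge0 => t _; apply: nneseries_ge0 => i _ _.
  rewrite -EFinM lee_fin indicE; case: (boolP (t \in A i)) => [/set_mem/AV/= h|_].
    by rewrite mulr1 ltW.
  by rewrite mulr0.
have sfin : s = (fine s)%:E.
  by rewrite fineK // ge0_fin_numE // (le_lt_trans ss0) ?ltry.
have r0 : 0 <= fine s by rewrite -lee_fin -sfin.
have rle : fine s <= C' * delta by rewrite -lee_fin -sfin.
have K : (forall x, 0 < x -> (x%:E * s <= EsumVA V A + x%:E * mu0 V x)%E).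
  by move=> x x0; exact: (@key _ _ _ P V x A x0 mA AV).
rewrite sfin in K *.
move: r0 rle K; set r := fine s => r0 rle K.
move: r0; rewrite le_eqVlt => /orP [/eqP r0|rpos].
  by rewrite -r0 !mule0.
pose x := r / (2 * C').
have x0 : 0 < x by rewrite divr_gt0 // mulr_gt0.
have xd : x < delta.
  rewrite /x ltr_pdivrMr ?mulr_gt0 //.
  by apply: le_lt_trans rle _; rewrite mulrC -subr_gt0; nra.
have m0 : (0 <= mu0 V x)%E.
  by apply: integral_ge0 => t _; apply: nneseries_ge0 => i _ _; rewrite lee_fin.
have mle := HC' x x0 xd.
have Kx := K x x0.
move: Kx m0 mle E0; case: (mu0 V x) => [m| |]; case: (EsumVA V A) => [e| |] //=.
- rewrite -!EFinM -EFinD !lee_fin => Kx m0 mle _.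
  have h : x * r - C' * (x * x) = (4 * C')^-1 * r * r.
    by rewrite /x; field; rewrite gt_eqF.
  have xm : x * m <= x * (C' * x) by rewrite ler_wpM2l // ltW.
  nra.
- by move=> *; rewrite leey.
Qed.
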